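(* Let $N\le M$, let $X_N=[x_1\ \cdots\ x_N]^\top\in\mathbb{R}^{N\times M}$ have full row rank, let $Y_N=[y_1\ \cdots\ y_N]^\top\in\mathbb{R}^N$, and let $\theta_{MN}=X_N^+Y_N$ with $X_N^+=X_N^\top(X_NX_N^\top)^{-1}$. Fix $\sigma^2>0$, a test vector $x\in\mathbb{R}^M$ and a test label $y\in\mathbb{R}$. Let $\lambda_y>0$ be a regularization factor such that the vector $$\hat\theta(z^N;x,y)=\theta_N+\left(X_{N+1}^\top X_{N+1}+\lambda_y I\right)^{-1}x\,(y-x^\top\theta_N),\qquad \theta_N=\left(X_N^\top X_N+\lambda_y I\right)^{-1}X_N^\top Y_N,$$ where $X_{N+1}=[x_1\ \cdots\ x_N\ x]^\top$, satisfies the norm constraint $\|\hat\theta(z^N;x,y)\|=\|\theta_{MN}\|$. Let $$K_0=1+x^\top X_N^+X_N^{+\top}x,\qquad \|x_\perp\|^2=x^\top\left[I-X_N^+X_N\right]x .$$ Then $$p_{\hat\theta(z^N;x,y)}(y|x)\le\frac{1}{\sqrt{2\pi\sigma^2}}\exp\left\{-\frac{(y-x^\top\theta_N)^2}{2\sigma^2K_0^2\left(1+\frac{\|x_\perp\|^2}{K_0\lambda_y}\right)^2}\right\}.$$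
   Context: For $\theta\in\mathbb{R}^M$, $p_\theta(y|x)=\frac{1}{\sqrt{2\pi\sigma^2}}\exp\{-\frac{1}{2\sigma^2}(y-x^\top\theta)^2\}$ is the Gaussian linear-regression likelihood with noise variance $\sigma^2$. $\|\cdot\|$ is the Euclidean norm. The vector $\hat\theta(z^N;x,y)$ is the ridge-regression solution (regularization $\lambda_y$) on the training set augmented by $(x,y)$, written in recursive least-squares form; it is the ''genie'' learner of the norm-constrained hypothesis set $\{p_\theta:\|\theta\|\le\|\theta_{MN}\|\}$. *)

(* Defs.v *)
From HB Require Import structures.
From mathcomp Require Import all_boot all_order all_algebra.
From mathcomp Require Import all_classical all_reals all_analysis.
Set Implicit Arguments. Unset Strict Implicit. Unset Printing Implicit Defensive.
Import Order.TTheory GRing.Theory Num.Theory.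
Local Open Scope ring_scope.

Section Defs.
Variable R : realType.

Definition sc (A : 'M[R]_1) : R := A 0 0.

Definition enorm {M : nat} (v : 'cV[R]_M) : R := Num.sqrt (\sum_i (v i 0) ^+ 2).

(* Moore-Penrose pseudo-inverse for a full-row-rank matrix: X^+ = X^T (X X^T)^{-1} *)
Definition pinvR {N M : nat} (X : 'M[R]_(N, M)) : 'M[R]_(M, N) :=
  X^T *m invmx (X *m X^T).

Definition gauss_lik {M : nat} (s2 : R) (theta : 'cV[R]_M) (x : 'cV[R]_M) (y : R) : R :=
  (Num.sqrt (2 * pi * s2))^-1 * expR (- (y - sc (x^T *m theta)) ^+ 2 / (2 * s2)).

Definition theta_MN {N M : nat} (X : 'M[R]_(N, M)) (Y : 'cV[R]_N) : 'cV[R]_M :=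
  pinvR X *m Y.

Definition theta_ridge {N M : nat} (lam : R) (X : 'M[R]_(N, M)) (Y : 'cV[R]_N) : 'cV[R]_M :=
  invmx (X^T *m X + lam%:M) *m X^T *m Y.

Definition theta_hat {N M : nat} (lam : R) (X : 'M[R]_(N, M)) (Y : 'cV[R]_N)
    (x : 'cV[R]_M) (y : R) : 'cV[R]_M :=
  let XN1 := col_mx X x^T in
  theta_ridge lam X Y +
  (y - sc (x^T *m theta_ridge lam X Y)) *: (invmx (XN1^T *m XN1 + lam%:M) *m x).

Definition K0 {N M : nat} (X : 'M[R]_(N, M)) (x : 'cV[R]_M) : R :=
  1 + sc (x^T *m pinvR X *m (pinvR X)^T *m x).

Definition xperp2 {N M : nat} (X : 'M[R]_(N, M)) (x : 'cV[R]_M) : R :=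
  sc (x^T *m (1%:M - pinvR X *m X) *m x).

End Defs.

(* Main.v *)
Require Import Defs.
From HB Require Import structures.
From mathcomp Require Import all_boot all_order all_algebra.
From mathcomp Require Import all_classical all_reals all_analysis.
From mathcomp Require Import ring lra.
Set Implicit Arguments. Unset Strict Implicit. Unset Printing Implicit Defensive.
Import Order.TTheory GRing.Theory Num.Theory.
Local Open Scope ring_scope.

Definition dot (R : realType) n (u v : 'cV[R]_n) : R := sc (u^T *m v).

Lemma dotE (R : realType) n (u v : 'cV[R]_n) : dot u v = \sum_i u i 0 * v i 0.
Proof. by rewrite /dot /sc !mxE; apply: eq_bigr => i _; rewrite !mxE. Qed.

Lemma dotC (R : realType) n (u v : 'cV[R]_n) : dot u v = dot v u.
Proof. by rewrite !dotE; apply: eq_bigr => i _; rewrite mulrC. Qed.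

Lemma dotDr (R : realType) n (u v w : 'cV[R]_n) : dot u (v + w) = dot u v + dot u w.
Proof. by rewrite !dotE -big_split; apply: eq_bigr => i _; rewrite mxE mulrDr. Qed.

Lemma dotBr (R : realType) n (u v w : 'cV[R]_n) : dot u (v - w) = dot u v - dot u w.
Proof. by rewrite !dotE -sumrB; apply: eq_bigr => i _; rewrite !mxE mulrBr. Qed.

Lemma dotZr (R : realType) n (u v : 'cV[R]_n) k : dot u (k *: v) = k * dot u v.
Proof. by rewrite !dotE mulr_sumr; apply: eq_bigr => i _; rewrite mxE mulrCA. Qed.

Lemma dotDl (R : realType) n (u v w : 'cV[R]_n) : dot (v + w) u = dot v u + dot w u.
Proof. by rewrite dotC dotDr !(dotC u). Qed.
Lemma dotBl (R : realType) n (u v w : 'cV[R]_n) : dot (v - w) u = dot v u - dot w u.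
Proof. by rewrite dotC dotBr !(dotC u). Qed.
Lemma dotZl (R : realType) n (u v : 'cV[R]_n) k : dot (k *: v) u = k * dot v u.
Proof. by rewrite dotC dotZr !(dotC u). Qed.

Lemma dot_ge0 (R : realType) n (u : 'cV[R]_n) : 0 <= dot u u.
Proof. by rewrite dotE; apply: sumr_ge0 => i _; rewrite -expr2 sqr_ge0. Qed.

Lemma dot_eq0 (R : realType) n (u : 'cV[R]_n) : dot u u = 0 -> u = 0.
Proof.
rewrite dotE => /psumr_eq0P H; apply/matrixP => i j; rewrite ord1 mxE.
have /eqP := H (fun i _ => ltac:(by rewrite -expr2 sqr_ge0)) i isT.
by rewrite mulf_eq0 orbb => /eqP.
Qed.

Lemma dot_mul (R : realType) m n (A : 'M[R]_(m, n)) u v :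
  dot u (A *m v) = dot (A^T *m u) v.
Proof. by rewrite /dot trmx_mul trmxK mulmxA. Qed.

Lemma unit_of_inj (R : realType) n (S : 'M[R]_n) :
  (forall v : 'cV_n, S *m v = 0 -> v = 0) -> S \in unitmx.
Proof.
move=> H; rewrite -unitmx_tr -row_free_unit -kermx_eq0; apply/eqP/row_matrixP => i.
rewrite row0; set u := row i _.
have: u *m S^T = 0 by rewrite /u -row_mul mulmx_ker row0.
move=> /(congr1 trmx); rewrite trmx_mul trmxK trmx0 => /H /(congr1 trmx).
by rewrite trmxK trmx0.
Qed.

Lemma ridge_unit (R : realType) K M (Z : 'M[R]_(K, M)) lam :
  0 < lam -> Z^T *m Z + lam%:M \in unitmx.
Proof.
move=> hl; apply: unit_of_inj => v /(congr1 (dot v)).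
rewrite mulmxDl dotDr mul_scalar_mx dotZr -mulmxA dot_mul trmxK.
have : dot v 0 = 0 by rewrite dotE big1 // => i _; rewrite mxE mulr0.
move=> -> h.
have h1 := dot_ge0 (Z *m v); have h2 := dot_ge0 v.
apply: dot_eq0; nra.
Qed.

Lemma gram_unit (R : realType) N M (X : 'M[R]_(N, M)) :
  \rank X = N -> X *m X^T \in unitmx.
Proof.
move=> hr; apply: unit_of_inj => v /(congr1 (dot v)).
rewrite -mulmxA dot_mul.
have : dot v 0 = 0 by rewrite dotE big1 // => i _; rewrite mxE mulr0.
move=> -> /dot_eq0 /(congr1 trmx); rewrite trmx_mul trmxK trmx0 => /eqP.
have hf : row_free X by rewrite /row_free hr.
by rewrite (mulmx_free_eq0 _ hf) => /eqP /(congr1 trmx); rewrite trmxK trmx0.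
Qed.

Lemma final_ineq (R : realType) (e c a K r lam s2 : R) :
  0 < s2 -> 0 < lam -> 1 <= K -> 0 <= r -> 0 <= a -> c * (1 + a) = 1 ->
  1 + a <= K + r / lam ->
  - (e * c) ^+ 2 / (2 * s2) <=
  - e ^+ 2 / (2 * s2 * K ^+ 2 * (1 + r / (K * lam)) ^+ 2).
Proof.
move=> hs hl hK hr ha hc hL.
have hK0 : K != 0 by apply/negP => /eqP K0; lra.
have -> : 2 * s2 * K ^+ 2 * (1 + r / (K * lam)) ^+ 2 = 2 * s2 * (K + r / lam) ^+ 2.
  by field; rewrite hK0 /= gt_eqF.
set L := K + r / lam.
have hrl : 0 <= r / lam by rewrite divr_ge0 // ltW.
have hL0 : 0 < L by rewrite /L; lra.
have hcL : 1 <= c * L.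
  have ha1 : 0 < 1 + a by lra.
  have hc0 : 0 < c by rewrite -(pmulr_lgt0 c ha1) hc ltr01.
  have := mulr_ge0 (ltW hc0) (ltac:(by rewrite subr_ge0) : 0 <= L - (1 + a)).
  rewrite mulrBr hc subr_ge0 //.
rewrite !mulNr lerN2.
have hs2 : 0 < 2 * s2 by lra.
have hL2 : 0 < L ^+ 2 by rewrite exprn_gt0.
rewrite invfM mulrA -mulrA [X in _ <= X]mulrC.
rewrite mulrCA ler_pM2l ?invr_gt0 //.
rewrite ler_pdivrMr //.
have h2 : 1 <= (c * L) ^+ 2.
  have h3 := mulr_ge0 (ltac:(by rewrite subr_ge0) : 0 <= c * L - 1) (ltac:(by rewrite subr_ge0) : 0 <= c * L - 1).
  rewrite expr2; nra.
have -> : (e * c) ^+ 2 * L ^+ 2 = e ^+ 2 * (c * L) ^+ 2 by ring.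
by rewrite -{1}[e ^+ 2]mulr1; apply: ler_wpM2l; rewrite ?sqr_ge0.
Qed.

Lemma dot0r (R : realType) n (u : 'cV[R]_n) : dot u 0 = 0.
Proof. by rewrite /dot mulmx0 /sc mxE. Qed.

Lemma dot_sub_sq (R : realType) n (u v : 'cV[R]_n) :
  dot (u - v) (u - v) = dot u u - 2 * dot u v + dot v v.
Proof. rewrite !dotBl !dotBr [dot v u]dotC; ring. Qed.

Lemma sc_add (R : realType) (A B : 'M[R]_1) : sc (A + B) = sc A + sc B.
Proof. by rewrite /sc mxE. Qed.
Lemma sc_sub (R : realType) (A B : 'M[R]_1) : sc (A - B) = sc A - sc B.
Proof. by rewrite /sc !mxE. Qed.

Unset Implicit Arguments.

Theorem lemma1 (R : realType) (N M : nat) (X : 'M[R]_(N, M)) (Y : 'cV[R]_N)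
    (s2 : R) (x : 'cV[R]_M) (y : R) (lam : R) :
  (N <= M)%N ->
  \rank X = N ->
  0 < s2 ->
  0 < lam ->
  enorm (theta_hat lam X Y x y) = enorm (theta_MN X Y) ->
  gauss_lik s2 (theta_hat lam X Y x y) x y <=
    (Num.sqrt (2 * pi * s2))^-1 *
    expR (- (y - sc (x^T *m theta_ridge lam X Y)) ^+ 2 /
          (2 * s2 * (K0 X x) ^+ 2 * (1 + xperp2 X x / (K0 X x * lam)) ^+ 2)).
Proof.
move=> _ hrk hs hl _.
set XN1 := col_mx X x^T.
set A := X^T *m X + lam%:M.
have uA : A \in unitmx by apply: ridge_unit.
have uB : XN1^T *m XN1 + lam%:M \in unitmx by apply: ridge_unit.
have hB : XN1^T *m XN1 + lam%:M = A + x *m x^T.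
  by rewrite /XN1 tr_col_mx trmxK mul_row_col /A addrAC.
set p := invmx (XN1^T *m XN1 + lam%:M) *m x.
set t := dot x p.
have Bp : (A + x *m x^T) *m p = x by rewrite -hB /p mulKVmx.
have Ap : A *m p = (1 - t) *: x.
  have Bp' : A *m p + t *: x = x.
    by move: Bp; rewrite mulmxDl -mulmxA [x^T *m p]mx11_scalar mul_mx_scalar.
  by rewrite -[A *m p](addrK (t *: x)) Bp' scalerBl scale1r.
set w := invmx A *m x.
have pw : p = (1 - t) *: w.
  by rewrite /w scalemxAr -Ap mulKmx.
set a := dot x w.
have ht : t = (1 - t) * a by rewrite {1}/t pw dotZr.
have Aw : A *m w = x by rewrite /w mulKVmx.
have a_eq : a = dot (X *m w) (X *m w) + lam * dot w w.
  rewrite /a dotC -{1}Aw /A mulmxDl dotDr mul_scalar_mx dotZr -mulmxA dot_mul trmxK.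
  by [].
set G := X *m X^T.
have uG : G \in unitmx by apply: gram_unit.
set g := invmx G *m (X *m x).
set xp := x - X^T *m g.
have Xxp : X *m xp = 0 by rewrite /xp mulmxBr mulmxA /g mulmxA -/G -(mulmxA G) mulKVmx // subrr.
have hxp : dot xp xp = dot x xp.
  have -> : dot xp xp = dot x xp - dot (X^T *m g) xp by rewrite {1}/xp dotBl.
  rewrite [dot (X^T *m g) xp]dotC dot_mul trmxK Xxp.
  by rewrite [dot 0 g]dotC dot0r subr0.
have a_eq2 : a = dot (X *m w) g + dot xp w.
  have hx : x = X^T *m g + xp by rewrite /xp addrC subrK.
  by rewrite /a {1}hx dotDl [dot (X^T *m g) w]dotC dot_mul trmxK.
set u := X *m w.
have h1 := dot_ge0 (u - g).
have h2 := dot_ge0 (lam *: w - xp).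
rewrite dot_sub_sq in h1; rewrite dot_sub_sq !dotZl !dotZr in h2.
rewrite [dot xp w]dotC in a_eq2.
rewrite -/u in a_eq a_eq2.
set q := dot g g in h1.
have hq : K0 X x = 1 + q.
  have hP : (pinvR X)^T *m x = g.
    by rewrite /pinvR trmx_mul trmx_inv trmxK trmx_mul trmxK -mulmxA.
  have hP' : x^T *m pinvR X = g^T by rewrite -hP trmx_mul trmxK.
  by rewrite /K0 -(mulmxA (x^T *m pinvR X)) hP hP'.
have hr : xperp2 X x = dot x xp.
  rewrite /xperp2 /dot -mulmxA; congr sc; congr (x^T *m _).
  by rewrite /xp mulmxBl mul1mx /pinvR /g !mulmxA.
have ha0 : 0 <= a by rewrite a_eq; have := dot_ge0 u; have := dot_ge0 w; nra.
have haq : a <= q + dot x xp / lam.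
  have hm := mulr_ge0 (ltW hl) h1.
  have hm2 : a * lam <= q * lam + dot x xp.
  rewrite -hxp.
  have e1 : a * lam = lam * dot u g + lam * dot w xp by rewrite a_eq2; ring.
  have e2 : a * lam = lam * dot u u + lam * (lam * dot w w) by rewrite {1}a_eq; ring.
  lra.
  have -> : q + dot x xp / lam = (q * lam + dot x xp) / lam.
    by field; rewrite gt_eqF.
  by rewrite ler_pdivlMr.
have hth : y - sc (x^T *m theta_hat lam X Y x y) =
    (y - sc (x^T *m theta_ridge lam X Y)) * (1 - t).
  rewrite /theta_hat /= -/XN1 -/p.
  rewrite -[sc (x^T *m (_ + _))]/(dot x (_ + _)) dotDr dotZr -/t.
  rewrite /dot; ring.
rewrite /gauss_lik hth hq hr.
apply: ler_wpM2l; first by rewrite invr_ge0 sqrtr_ge0.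
rewrite ler_expR.
have hq0 : 0 <= q by apply: dot_ge0.
apply: (@final_ineq R _ (1 - t) a) => //.
- lra.
- by rewrite -hxp dot_ge0.
- by rewrite mulrDr mulr1 [(1 - t) * a]mulrC mulrC -ht subrK.
- lra.
Qed.
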